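(* Let $n\in\mathbb{N}$, $\boldsymbol{A}\in\mathbb{R}^{n\times n}$, $\boldsymbol{b}\in\mathbb{R}^n$ with $(\boldsymbol{A},\boldsymbol{b})$ controllable, and $g:\mathbb{R}^n\to\mathbb{R}$ with $g(\boldsymbol{0})\neq 0$. Let $\mathcal{X}=\bigcup_{i=1}^s\mathcal{X}_i\subset\mathbb{R}^n$ with $s\in\mathbb{N}$ and each $\mathcal{X}_i$ convex, such that for every $i$ either ($g(\boldsymbol{x})\ge 0$ for all $\boldsymbol{x}\in\mathcal{X}_i$ and $g$ is concave on $\mathcal{X}_i$) or ($g(\boldsymbol{x})\le 0$ for all $\boldsymbol{x}\in\mathcal{X}_i$ and $g$ is convex on $\mathcal{X}_i$); assume $\boldsymbol{0}\in\mathrm{int}(\mathcal{X}_1)$, and let $\mathcal{U}=[\underline{u},\overline{u}]$ with $\underline{u}<0<\overline{u}$. Let $\boldsymbol{c}\in\mathbb{R}^n$ satisfy $\boldsymbol{c}^\top\boldsymbol{A}^{i}\boldsymbol{b}=0$ for $i\in\{0,\dots,n-2\}$ and $\boldsymbol{c}^\top\boldsymbol{A}^{n-1}\boldsymbol{b}\neq0$, let $b_0\neq 0$, $a_0,\dots,a_{n-1}\in\mathbb{R}$, $\beta:=\boldsymbol{c}^\top\boldsymbol{A}^{n-1}\boldsymbol{b}$, $\boldsymbol{\alpha}^\top:=\boldsymbol{c}^\top(\boldsymbol{A}^n+\sum_{i=0}^{n-1}a_i\boldsymbol{A}^i)$. Let $\mathcal{X}^\circ:=\{\boldsymbol{x}\in\mathbb{R}^n\mid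 g(\boldsymbol{x})\neq0\}$, $\Psi(\boldsymbol{x},v):=\frac{b_0v-\boldsymbol{\alpha}^\top\boldsymbol{x}}{\beta g(\boldsymbol{x})}$ for $\boldsymbol{x}\in\mathcal{X}^\circ$, and $$\mathcal{Z}:=\Big\{(\boldsymbol{x},v)\in\mathbb{R}^{n+1}\,\Big|\,\boldsymbol{x}\in\mathcal{X}\cap\mathcal{X}^\circ,\ \Psi(\boldsymbol{x},v)\in\mathcal{U}\Big\}\cup\Big\{(\boldsymbol{x},v)\in\mathbb{R}^{n+1}\,\Big|\,\boldsymbol{x}\in\mathcal{X}\setminus\mathcal{X}^\circ,\ v=\tfrac{\boldsymbol{\alpha}^\top\boldsymbol{x}}{b_0}\Big\}.$$ For $i\in\{1,\dots,s\}$ define $\mathcal{U}_i(\boldsymbol{x}):=[\beta g(\boldsymbol{x})\underline{u},\beta g(\boldsymbol{x})\overline{u}]$ if $\beta g(\boldsymbol{x})\ge0$ for all $\boldsymbol{x}\in\mathcal{X}_i$, and $\mathcal{U}_i(\boldsymbol{x}):=[\beta g(\boldsymbol{x})\overline{u},\beta g(\boldsymbol{x})\underline{u}]$ otherwise, and $$\mathcal{Z}_i:=\Big\{(\boldsymbol{x},v)\in\mathbb{R}^{n+1}\,\Big|\,\boldsymbol{x}\in\mathcal{X}_i,\ b_0v-\boldsymbol{\alpha}^\top\boldsymbol{x}\in\mathcal{U}_i(\boldsymbol{x})\Big\}.$$ Then each $\mathcal{Z}_i$ is convex and $\mathcal{Z}=\bigcup_{i=1}^s\mathcal{Z}_i$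.
   Context: This arises from the discrete-time system $\boldsymbol{x}(k+1)=\boldsymbol{A}\boldsymbol{x}(k)+g(\boldsymbol{x}(k))\boldsymbol{b}\,u(k)$ with constraints $\boldsymbol{x}\in\mathcal{X}$, $u\in\mathcal{U}$; $\Psi$ is the exactly linearizing feedback $u=\Psi(\boldsymbol{x},v)$ with artificial input $v$. *)

(* Defs.v *)
From HB Require Import structures.
From mathcomp Require Import all_boot all_order all_algebra.
From mathcomp Require Import all_classical all_reals all_analysis.
Set Implicit Arguments. Unset Strict Implicit. Unset Printing Implicit Defensive.
Import Order.TTheory GRing.Theory Num.Theory numFieldNormedType.Exports.
Local Open Scope ring_scope.
Local Open Scope classical_set_scope.
Local Open Scope convex_scope.

Definition concave_function (R : realType) (E : lmodType R)
    (D : set (convex_lmodType E)) (f : convex_lmodType E -> R^o) :=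
  forall (t : {i01 R}),
    {in D &, forall x y : convex_lmodType E, f x <| t |> f y <= f (x <| t |> y)}.

Definition ctrb_mx (R : realType) (n : nat) (A : 'M[R]_n) (b : 'cV[R]_n) : 'M[R]_n :=
  \matrix_(i < n, j < n) (A ^+ j *m b) i ord0.

Definition controllable (R : realType) (n : nat) (A : 'M[R]_n) (b : 'cV[R]_n) :=
  \rank (ctrb_mx A b) = n.

Definition cAib (R : realType) (n : nat) (c : 'cV[R]_n) (A : 'M[R]_n)
  (b : 'cV[R]_n) (i : nat) : R := (c^T *m (A ^+ i) *m b) ord0 ord0.

Definition alphaT (R : realType) (n : nat) (c : 'cV[R]_n) (A : 'M[R]_n)
  (a : 'I_n -> R) : 'rV[R]_n :=
  c^T *m (A ^+ n + \sum_(i < n) a i *: A ^+ i).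

Definition alphax (R : realType) (n : nat) (c : 'cV[R]_n) (A : 'M[R]_n)
  (a : 'I_n -> R) (x : 'cV[R]_n) : R := (alphaT c A a *m x) ord0 ord0.

Definition Psi (R : realType) (n : nat) (c : 'cV[R]_n) (A : 'M[R]_n) (b : 'cV[R]_n)
  (a : 'I_n -> R) (b0 : R) (g : 'cV[R]_n -> R) (x : 'cV[R]_n) (v : R) : R :=
  (b0 * v - alphax c A a x) / (cAib c A b n.-1 * g x).

Definition idx (s : nat) : set nat := [set i | (1 <= i <= s)%N].

Definition Xunion (R : realType) (n s : nat) (Xs : nat -> set 'cV[R]_n) : set 'cV[R]_n :=
  \bigcup_(i in idx s) Xs i.

Definition Zset (R : realType) (n s : nat) (Xs : nat -> set 'cV[R]_n)
  (c : 'cV[R]_n) (A : 'M[R]_n) (b : 'cV[R]_n) (a : 'I_n -> R) (b0 : R)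
  (g : 'cV[R]_n -> R) (ulo uhi : R) : set ('cV[R]_n * R^o) :=
  [set p | Xunion s Xs p.1 /\ g p.1 != 0 /\
           ulo <= Psi c A b a b0 g p.1 p.2 <= uhi]
  `|` [set p | Xunion s Xs p.1 /\ g p.1 = 0 /\ p.2 = alphax c A a p.1 / b0].

Definition Ui (R : realType) (n : nat) (Xi : set 'cV[R]_n) (beta : R)
  (g : 'cV[R]_n -> R) (ulo uhi : R) (x : 'cV[R]_n) : set R :=
  if `[< forall y, Xi y -> 0 <= beta * g y >]
  then [set w | beta * g x * ulo <= w <= beta * g x * uhi]
  else [set w | beta * g x * uhi <= w <= beta * g x * ulo].

Definition Zi (R : realType) (n : nat) (Xi : set 'cV[R]_n)
  (c : 'cV[R]_n) (A : 'M[R]_n) (b : 'cV[R]_n) (a : 'I_n -> R) (b0 : R)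
  (g : 'cV[R]_n -> R) (ulo uhi : R) : set ('cV[R]_n * R^o) :=
  [set p | Xi p.1 /\
           Ui Xi (cAib c A b n.-1) g ulo uhi p.1 (b0 * p.2 - alphax c A a p.1)].

(* Main.v *)
Require Import Defs.
From HB Require Import structures.
From mathcomp Require Import all_boot all_order all_algebra.
From mathcomp Require Import all_classical all_reals all_analysis.
From mathcomp Require Import ring lra.
Import Order.TTheory GRing.Theory Num.Theory numFieldNormedType.Exports.
Local Open Scope ring_scope.
Local Open Scope classical_set_scope.
Local Open Scope convex_scope.

Lemma alphax_conv (R : realType) n (c : 'cV[R]_n) A a (x y : 'cV[R]_n) (t : {i01 R}) :
  alphax c A a ((x : convex_lmodType _) <| t |> y) = t%:num * alphax c A a x + (1 - t%:num) * alphax c A a y.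
Proof.
rewrite /alphax /= mulmxDr -!scalemxAr !mxE //.
Qed.

Lemma conv_pair (R : realType) n (x y : 'cV[R]_n) (v u : R^o) (t : {i01 R}) :
  ((x, v) : convex_lmodType ('cV[R]_n * R^o)%type) <| t |> (y, u) =
  ((x : convex_lmodType 'cV[R]_n) <| t |> y, t%:num * v + (1 - t%:num) * u).
Proof. by []. Qed.


Lemma conc_aux (R : realFieldType) (be gx gy gz p : R) :
  0 <= p -> p <= 1 -> 0 <= be * gx -> 0 <= be * gy -> 0 <= be * gz ->
  (0 <= gx /\ 0 <= gy /\ 0 <= gz /\ p * gx + (1 - p) * gy <= gz) \/
  (gx <= 0 /\ gy <= 0 /\ gz <= 0 /\ gz <= p * gx + (1 - p) * gy) ->
  p * (be * gx) + (1 - p) * (be * gy) <= be * gz.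
Proof.
move=> p0 p1 hx hy hz [[gx0 [gy0 [gz0 c]]]|[gx0 [gy0 [gz0 c]]]];
  have [bp|bn] := leP 0 be.
- nra.
- have ex : be * gx = 0 by nra.
  have ey : be * gy = 0 by nra.
  rewrite ex ey; nra.
- have ex : be * gx = 0 by nra.
  have ey : be * gy = 0 by nra.
  rewrite ex ey; nra.
- nra.
Qed.

Lemma conv_aux (R : realFieldType) (be gx gy gz g0 p : R) :
  0 <= p -> p <= 1 -> be * g0 < 0 ->
  (0 <= g0 /\ 0 <= gx /\ 0 <= gy /\ 0 <= gz /\ p * gx + (1 - p) * gy <= gz) \/
  (g0 <= 0 /\ gx <= 0 /\ gy <= 0 /\ gz <= 0 /\ gz <= p * gx + (1 - p) * gy) ->
  be * gz <= p * (be * gx) + (1 - p) * (be * gy).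
Proof.
move=> p0 p1 h0 [[g00 [gx0 [gy0 [gz0 c]]]]|[g00 [gx0 [gy0 [gz0 c]]]]];
  have [bp|bn] := leP 0 be.
- nra.
- nra.
- nra.
- nra.
Qed.

Lemma itv_aux1 (R : realFieldType) (Gx Gy Gz wx wy p lo hi : R) :
  0 <= p -> p <= 1 -> lo < 0 -> 0 < hi ->
  p * Gx + (1 - p) * Gy <= Gz ->
  Gx * lo <= wx <= Gx * hi -> Gy * lo <= wy <= Gy * hi ->
  Gz * lo <= p * wx + (1 - p) * wy <= Gz * hi.
Proof. move=> p0 p1 l0 h0 G /andP[a1 b1] /andP[a2 b2]; apply/andP; split; nra. Qed.

Lemma itv_aux2 (R : realFieldType) (Gx Gy Gz wx wy p lo hi : R) :
  0 <= p -> p <= 1 -> lo < 0 -> 0 < hi ->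
  Gz <= p * Gx + (1 - p) * Gy ->
  Gx * hi <= wx <= Gx * lo -> Gy * hi <= wy <= Gy * lo ->
  Gz * hi <= p * wx + (1 - p) * wy <= Gz * lo.
Proof. move=> p0 p1 l0 h0 G /andP[a1 b1] /andP[a2 b2]; apply/andP; split; nra. Qed.

Lemma Zi_convex (R : realType) n (Xi : set 'cV[R]_n) c A b a b0 (g : 'cV[R]_n -> R) ulo uhi :
  convex_set Xi ->
  ((forall x, Xi x -> 0 <= g x) /\ concave_function Xi g) \/
     ((forall x, Xi x -> g x <= 0) /\ convex_function Xi g) ->
  ulo < 0 -> 0 < uhi ->
  convex_set (Zi Xi c A b a b0 g ulo uhi).
Proof.
move=> cX Hg lo0 hi0 [x v] [y u] t; rewrite !inE /Zi /= => -[Xx Ux] [Xy Uy].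
set z := (_ *: x + _ *: y).
have Xz : Xi z by have := cX x y t; rewrite !inE; apply.
split => //.
have -> : alphax c A a z = t%:num * alphax c A a x + (1 - t%:num) * alphax c A a y
  := @alphax_conv R n c A a x y t.
have -> : (t%:num *: v + unstable.onem t%:num *: u : R^o) = t%:num * v + (1 - t%:num) * u by [].
have t0 : 0 <= t%:num by [].
have t1 : t%:num <= 1 by [].
move: Ux Uy; rewrite /Ui.
set be := cAib c A b n.-1.
set p := t%:num.
have -> : b0 * (p * v + (1 - p) * u) - (p * alphax c A a x + (1 - p) * alphax c A a y)
  = p * (b0 * v - alphax c A a x) + (1 - p) * (b0 * u - alphax c A a y) by ring.
have [Hgi|Hgi] : ((forall x, Xi x -> 0 <= g x) /\ p * g x + (1 - p) * g y <= g z) \/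
   ((forall x, Xi x -> g x <= 0) /\ g z <= p * g x + (1 - p) * g y).
  case: Hg => [[gp gc]|[gp gc]]; [left|right]; split => //;
  by have := gc t x y; rewrite !inE => /(_ Xx Xy).
all: case: asboolP => HB.
- apply: itv_aux1 => //; apply: conc_aux => //; try exact: HB.
  by case: Hgi => gp gc; left; rewrite !gp.
- have [y0 [Xy0 Hy0]] : exists y0, Xi y0 /\ be * g y0 < 0 by
    apply: contrapT => Hn; apply: HB => w Xw; rewrite leNgt; apply/negP => Hw;
    by apply: Hn; exists w.
  apply: itv_aux2 => //; apply: (@conv_aux _ be (g x) (g y) (g z) (g y0) p) => //.
  by case: Hgi => gp gc; left; rewrite !gp.
- apply: itv_aux1 => //; apply: conc_aux => //; try exact: HB.
  by case: Hgi => gp gc; right; rewrite !gp.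
- have [y0 [Xy0 Hy0]] : exists y0, Xi y0 /\ be * g y0 < 0 by
    apply: contrapT => Hn; apply: HB => w Xw; rewrite leNgt; apply/negP => Hw;
    by apply: Hn; exists w.
  apply: itv_aux2 => //; apply: (@conv_aux _ be (g x) (g y) (g z) (g y0) p) => //.
  by case: Hgi => gp gc; right; rewrite !gp.
Qed.

Lemma psi_pos (R : realFieldType) (G w lo hi : R) : 0 < G ->
  (lo <= w / G <= hi) = (G * lo <= w <= G * hi).
Proof. by move=> G0; rewrite ler_pdivlMr // ler_pdivrMr // ![_ * G]mulrC. Qed.

Lemma psi_neg (R : realFieldType) (G w lo hi : R) : G < 0 ->
  (lo <= w / G <= hi) = (G * hi <= w <= G * lo).
Proof. by move=> G0; rewrite ler_ndivlMr // ler_ndivrMr // ![_ * G]mulrC andbC. Qed.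

Lemma sign_aux (R : realFieldType) (be gx g0 : R) :
  be * g0 < 0 -> (0 <= g0 /\ 0 <= gx) \/ (g0 <= 0 /\ gx <= 0) -> be * gx <= 0.
Proof. by move=> h [[a b]|[a b]]; have [bp|bn] := leP 0 be; nra. Qed.

Lemma Gsign (R : realType) n (Xi : set 'cV[R]_n) (g : 'cV[R]_n -> R) be x :
  ((forall x, Xi x -> 0 <= g x) /\ concave_function Xi g) \/
     ((forall x, Xi x -> g x <= 0) /\ convex_function Xi g) ->
  Xi x -> be * g x != 0 ->
  if `[< forall y, Xi y -> 0 <= be * g y >] then 0 < be * g x else be * g x < 0.
Proof.
move=> Hg Xx Gn0; case: asboolP => HB.
  by rewrite lt_neqAle eq_sym Gn0 HB.
have [y0 [Xy0 Hy0]] : exists y0, Xi y0 /\ be * g y0 < 0.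
  apply: contrapT => Hn; apply: HB => w Xw; rewrite leNgt; apply/negP => Hw.
  by apply: Hn; exists w.
rewrite lt_neqAle Gn0 /=; apply: (@sign_aux _ be (g x) (g y0) Hy0).
by case: Hg => [[gp _]|[gp _]]; [left|right]; rewrite !gp.
Qed.

Theorem theorem1 (R : realType) (n : nat) (A : 'M[R]_n) (b : 'cV[R]_n)
  (g : 'cV[R]_n -> R) (s : nat) (Xs : nat -> set 'cV[R]_n)
  (ulo uhi : R) (c : 'cV[R]_n) (b0 : R) (a : 'I_n -> R) :
  controllable A b ->
  g 0 != 0 ->
  (1 <= s)%N ->
  (forall i, (1 <= i <= s)%N -> convex_set (Xs i)) ->
  (forall i, (1 <= i <= s)%N ->
     ((forall x, Xs i x -> 0 <= g x) /\ concave_function (Xs i) g) \/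
     ((forall x, Xs i x -> g x <= 0) /\ convex_function (Xs i) g)) ->
  interior (Xs 1%N) 0 ->
  ulo < 0 -> 0 < uhi ->
  (forall i, (i.+2 <= n)%N -> cAib c A b i = 0) ->
  cAib c A b n.-1 != 0 ->
  b0 != 0 ->
  (forall i, (1 <= i <= s)%N -> convex_set (Zi (Xs i) c A b a b0 g ulo uhi)) /\
  Zset s Xs c A b a b0 g ulo uhi = \bigcup_(i in idx s) Zi (Xs i) c A b a b0 g ulo uhi.
Proof.
move=> _ _ _ Hcv Hsg _ lo0 hi0 _ be0 b00; split.
  by move=> i Hi; apply: Zi_convex => //; [apply: Hcv | apply: Hsg].
apply/seteqP; split.
- move=> [x v] /= [[[i Hi Xix] [gx Hpsi]]|[[i Hi Xix] [gx0 ev]]]; simpl in *; exists i => //;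
    split => //.
  + have Gn0 : cAib c A b n.-1 * g x != 0 by rewrite mulf_neq0.
    have := @Gsign R n (Xs i) g _ x (Hsg i Hi) Xix Gn0; rewrite /Ui; case: asboolP => _ G0 /=.
    * by rewrite -psi_pos.
    * by rewrite -psi_neg.
  + have w0 : b0 * v - alphax c A a x = 0 by rewrite ev mulrC divfK // subrr.
    rewrite /Ui w0 gx0 mulr0 !mul0r.
    by case: asboolP => _ /=; rewrite lexx.
- move=> [x v] [i Hi] /= [Xix HU].
  have Xx : Xunion s Xs x by exists i.
  have [gx0|gx] := eqVneq (g x) 0.
  + right; split => //; split => //.
    have w0 : b0 * v - alphax c A a x = 0.
      move: HU; rewrite /Ui gx0 mulr0 !mul0r; case: asboolP => _ /= /andP[h1 h2];
      by apply/eqP; rewrite eq_le h1 h2.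
    have e : b0 * v = alphax c A a x by apply/eqP; rewrite -subr_eq0 w0.
    by rewrite /= -e [b0 * v]mulrC mulfK.
  + left; split => //; split => //.
    have Gn0 : cAib c A b n.-1 * g x != 0 by rewrite mulf_neq0.
    move: HU; have := @Gsign R n (Xs i) g _ x (Hsg i Hi) Xix Gn0; rewrite /Ui /Psi.
    case: asboolP => _ G0 /= HU.
    * by rewrite psi_pos.
    * by rewrite psi_neg.
Qed.
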